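(* Let $r\ge4$ be even and $n=r+2$. For $i=1,\dots,4$ let $a_i,g_i:\mathbb F_2^r\to\mathbb F_2$ and define $\mathfrak f_i:\mathbb F_2^r\times\mathbb F_2^2\to\mathbb F_2$ by $\mathfrak f_i(x,y)=a_i(x)\oplus(g_i(x)\oplus y_1)(g_i(x)\oplus y_2)$. Assume that each $a_i$ is bent with $a_1^*\oplus a_2^*\oplus a_3^*\oplus a_4^*=1$ on $\mathbb F_2^r$, and that $a_1\oplus g_1,\dots,a_4\oplus g_4$ are semi-bent functions with pairwise disjoint Walsh supports. Then each $\mathfrak f_i$ satisfies $W_{\mathfrak f_i}(w)\in\{0,\pm2^{n/2},\pm2^{(n+2)/2}\}$ for all $w\in\mathbb F_2^n$, and: (a) the sets $S^{[1]}_{\mathfrak f_i}=\{w\in\mathbb F_2^n:|W_{\mathfrak f_i}(w)|=2^{(n+2)/2}\}$, $i=1,\dots,4$, are pairwise disjoint; (b) the sets $S^{[2]}_{\mathfrak f_i}=\{w\in\mathbb F_2^n:|W_{\mathfrak f_i}(w)|=2^{n/2}\}$ are all equal to a common set $S$, and the functions $\mathfrak f^*_{[2],i}:S\to\mathbb F_2$ defined by $W_{\mathfrak f_i}(w)=2^{n/2}(-1)^{\mathfrak f^*_{[2],i}(w)}$ satisfy $\mathfrak f^*_{[2],1}\oplus\mathfrak f^*_{[2],2}\oplus\mathfrak f^*_{[2],3}\oplus\mathfrak f^*_{[2],4}=1$ on $S$.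
   Context: $W_f(\omega)=\sum_x(-1)^{f(x)\oplus\omega\cdot x}$, Walsh support $S_f=\{\omega:W_f(\omega)\ne0\}$. For even $r$, $a$ is bent if $|W_a(u)|=2^{r/2}$ for all $u$, with dual $a^*$ defined by $W_a(u)=2^{r/2}(-1)^{a^*(u)}$; $a$ is semi-bent if $W_a(u)\in\{0,\pm2^{(r+2)/2}\}$ for all $u$. *)

(* Defs.v *)
(* Vectors of F_2^m are boolean finite functions 'I_m -> bool;
   F_2 addition is xor (addb). *)
From HB Require Import structures.
From mathcomp Require Import all_boot all_order all_algebra.
Set Implicit Arguments. Unset Strict Implicit. Unset Printing Implicit Defensive.
Import Order.TTheory GRing.Theory Num.Theory.
Local Open Scope ring_scope.

Definition bv (m : nat) := {ffun 'I_m -> bool}.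

Definition dot (m : nat) (u x : bv m) : bool := \big[addb/false]_(i < m) (u i && x i).

Definition walsh (m : nat) (f : bv m -> bool) (w : bv m) : int :=
  \sum_(x : bv m) (-1) ^+ (f x (+) dot w x).

Definition wsupp (m : nat) (f : bv m -> bool) : {set bv m} :=
  [set w | walsh f w != 0].

Definition bent (m : nat) (f : bv m -> bool) : Prop :=
  forall u, `|walsh f u| = 2 ^+ (m./2).

Definition semibent (m : nat) (f : bv m -> bool) : Prop :=
  forall u, walsh f u \in [:: 0; 2 ^+ (m.+2)./2; - 2 ^+ (m.+2)./2].

(* sign function: if W_f(u) = c (-1)^s with c > 0, then s = sgnbit f u.
   For bent f this is the dual f^*: W_f(u) = 2^(m/2) (-1)^(f^*(u)). *)
Definition sgnbit (m : nat) (f : bv m -> bool) (u : bv m) : bool := walsh f u < 0.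

(* Identification F_2^r x F_2^2 = F_2^(r+2): z = (x, y1, y2) *)
Definition xpart (r : nat) (z : bv (r + 2)) : bv r := [ffun i : 'I_r => z (lshift 2 i)].
Definition y1 (r : nat) (z : bv (r + 2)) : bool := z (rshift r (0 : 'I_2)).
Definition y2 (r : nat) (z : bv (r + 2)) : bool := z (rshift r (1 : 'I_2)).

Definition frakf (r : nat) (a g : bv r -> bool) (z : bv (r + 2)) : bool :=
  a (xpart z) (+) ((g (xpart z) (+) y1 z) && (g (xpart z) (+) y2 z)).

(* Main.v *)
Require Import Defs.
From HB Require Import structures.
From mathcomp Require Import all_boot all_order all_algebra.
Import Order.TTheory GRing.Theory Num.Theory.
Local Open Scope ring_scope.

Section W.
Variable r : nat.


Definition hh (p : bv r * (bool * bool)) : bv (r + 2) :=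
  [ffun i => match split i with inl j => p.1 j
             | inr k => if k == 0 then p.2.1 else p.2.2 end].
Definition hinv (z : bv (r + 2)) : bv r * (bool * bool) := (xpart z, (y1 z, y2 z)).

Lemma hh_l p j : hh p (lshift 2 j) = p.1 j.
Proof.
rewrite ffunE; case: splitP => [j' /= E|k /= E].
  by congr (p.1 _); apply/val_inj.
by move: (ltn_ord j); rewrite E ltnNge leq_addr.
Qed.

Lemma hh_r p k : hh p (rshift r k) = if k == 0 then p.2.1 else p.2.2.
Proof.
rewrite ffunE; case: splitP => [j' /= E|k' /= E].
  by move: (ltn_ord j'); rewrite -E ltnNge leq_addr.
have -> : k' = k by apply/val_inj/eqP; rewrite -(eqn_add2l r) E.
by [].
Qed.

Lemma hhK : cancel hh hinv.
Proof.
case=> x [b1 b2]; rewrite /hinv /xpart /y1 /y2 !hh_r /=; congr (_, _).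
by apply/ffunP => j; rewrite ffunE hh_l.
Qed.

Lemma hinvK : cancel hinv hh.
Proof.
move=> z; apply/ffunP => i; rewrite ffunE.
have := splitK i; case: (split i) => [j|k] /= <-; first by rewrite /xpart ffunE.
case: k => [[|[|//]] Hk]; rewrite /y1 /y2 /=.
  by congr (z (rshift r _)); apply/val_inj.
by congr (z (rshift r _)); apply/val_inj.
Qed.

Lemma dot_hh (w : bv (r + 2)) p :
  dot w (hh p) = dot (xpart w) p.1 (+) (y1 w && p.2.1) (+) (y2 w && p.2.2).
Proof.
rewrite /dot big_split_ord /= !big_ord_recr big_ord0 /=.
rewrite addbA; congr (_ (+) _ (+) _).
  by apply: eq_bigr => j _; rewrite hh_l /xpart ffunE.
  rewrite (_ : widen_ord _ _ = 0 :> 'I_2); first by rewrite hh_r.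
  by apply/val_inj.
by rewrite (_ : ord_max = 1 :> 'I_2); [rewrite hh_r | apply/val_inj].
Qed.

Lemma walshF (a g : bv r -> bool) (w : bv (r + 2)) :
  walsh (frakf a g) w =
  if y1 w == y2 w then 2 * (-1) ^+ (y1 w && y2 w) * walsh a (xpart w)
  else 2 * walsh (fun x => a x (+) g x) (xpart w).
Proof.
rewrite /walsh (reindex hh); last by apply: onW_bij; exists hinv; [exact: hhK|exact: hinvK].
rewrite -(pair_big xpredT xpredT (fun x t => (-1) ^+ (frakf a g (hh (x, t)) (+) dot w (hh (x, t))) : int)) /=.
have E : forall x t, frakf a g (hh (x, t)) = a x (+) ((g x (+) t.1) && (g x (+) t.2)).
  move=> x [b1 b2]; have /= := congr1 fst (hhK (x, (b1, b2))); have /= := congr1 snd (hhK (x, (b1, b2))).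
  by rewrite /hinv /frakf => [[-> ->] ->].
case: ifP => Hy; rewrite mulr_sumr; apply: eq_bigr => x _;
  rewrite -(pair_big xpredT xpredT (fun b1 b2 => (-1) ^+ (frakf a g (hh (x, (b1, b2))) (+) dot w (hh (x, (b1, b2)))) : int)) /=;
  rewrite !big_bool /= !E !dot_hh /=.
  move/eqP: Hy => ->.
  by case: (a x); case: (g x); case: (dot _ x); case: (y2 w).
move: Hy.
by case: (a x); case: (g x); case: (dot _ x); case: (y1 w); case: (y2 w).
Qed.
End W.

Lemma pow2_neq k : (2:int) ^+ k.+2 != 2 ^+ k.+1.
Proof. rewrite gt_eqF // (exprS _ k.+1) ltr_pMl // exprn_gt0 //. Qed.

Lemma norm_cases (x c : int) : `|x| = c -> x = c \/ x = - c.
Proof.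
move=> <-; case: (ltrgtP x 0) => h.
- by right; rewrite ltr0_norm // opprK.
- by left; rewrite gtr0_norm.
- by left; rewrite h normr0.
Qed.

Lemma sgn_lem (x : int) (s : bool) : x != 0 -> (2 * (-1) ^+ s * x < 0) = s (+) (x < 0).
Proof.
move=> hx; case: s => /=; rewrite ?expr1 ?expr0 ?mulr1; last by rewrite pmulr_rlt0.
rewrite mulrN1 mulNr oppr_lt0 pmulr_rgt0 //.
by case: (ltrgtP x 0) hx.
Qed.

Lemma half2 m : (m.+2)./2 = (m./2).+1.
Proof. by []. Qed.

Theorem mainTheorem7 (r : nat) (a g : 'I_4 -> bv r -> bool) :
  (4 <= r)%N -> ~~ odd r ->
  (forall i, bent (a i)) ->
  (forall u, \big[addb/false]_(i < 4) sgnbit (a i) u = true) ->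
  (forall i, semibent (fun x => a i x (+) g i x)) ->
  (forall i j, i != j ->
     [disjoint wsupp (fun x => a i x (+) g i x) & wsupp (fun x => a j x (+) g j x)]) ->
  let n := (r + 2)%N in
  let F := fun i => frakf (a i) (g i) in
  (forall i (w : bv n), walsh (F i) w \in
     [:: 0; 2 ^+ n./2; - 2 ^+ n./2; 2 ^+ n.+2./2; - 2 ^+ n.+2./2]) /\
  (forall i j, i != j ->
     [disjoint [set w : bv n | `|walsh (F i) w| == 2 ^+ n.+2./2]
             & [set w : bv n | `|walsh (F j) w| == 2 ^+ n.+2./2]]) /\
  (exists S : {set bv n},
     (forall i, [set w : bv n | `|walsh (F i) w| == 2 ^+ n./2] = S) /\
     (forall w, w \in S -> \big[addb/false]_(i < 4) sgnbit (F i) w = true)).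
Proof.
move=> _ _ Hb Hs Hsb Hd n F; rewrite {}/n {}/F.
have En : ((r + 2)./2 = (r./2).+1)%N by rewrite addn2.
have En2 : ((r + 2).+2./2 = (r./2).+2)%N by rewrite addn2.
rewrite En En2.
set k := r./2.
have Hb' : forall i u, `|walsh (a i) u| = 2 ^+ k by move=> i u; exact: Hb.
have Hsb' : forall i u, walsh (fun x => a i x (+) g i x) u \in [:: 0; 2 ^+ k.+1; - 2 ^+ k.+1].
  by move=> i u; have := Hsb i u; rewrite half2.
have nz : forall m, (2:int) ^+ m != 0 by move=> m; exact: expf_neq0.
split.
  move=> i w; rewrite walshF; case: ifP => _.
    have [->|->] := norm_cases _ _ (Hb' i (xpart w));
      case: (_ && _); rewrite !inE !exprS ?expr1 ?expr0 ?mulr1 ?mulrN1 ?mulrN ?mulNr ?opprK ?eqxx ?orbT //.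
  move: (Hsb' i (xpart w)); rewrite !inE => /or3P [] /eqP ->;
    rewrite ?mulr0 ?eqxx // -?exprS ?mulrN ?eqxx ?orbT //.
split.
  move=> i j ij; rewrite -setI_eq0; apply/eqP/setP => w; rewrite !inE !walshF.
  case: ifP => Hy.
    by rewrite !normrM normr_sign Hb' mulr1 -exprS eq_sym (negbTE (pow2_neq _)).
  apply/negbTE/negP => /andP[h1 h2].
  have n1 : walsh (fun x => a i x (+) g i x) (xpart w) != 0.
    by apply: contraTneq h1 => ->; rewrite mulr0 normr0 eq_sym.
  have n2 : walsh (fun x => a j x (+) g j x) (xpart w) != 0.
    by apply: contraTneq h2 => ->; rewrite mulr0 normr0 eq_sym.
  have := disjointFr (Hd i j ij) (_ : xpart w \in wsupp (fun x => a i x (+) g i x)).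
  by rewrite !inE n2 => /(_ n1).
exists [set w : bv (r + 2) | y1 w == y2 w]; split.
  move=> i; apply/setP => w; rewrite !inE walshF; case: ifP => Hy.
    by rewrite !normrM normr_sign Hb' mulr1 -exprS eqxx.
  move: (Hsb' i (xpart w)); rewrite !inE => /or3P [] /eqP ->.
  - by rewrite mulr0 normr0 eq_sym (negbTE (nz _)).
  - by rewrite -exprS normrX (negbTE (pow2_neq _)).
  - by rewrite mulrN normrN -exprS normrX (negbTE (pow2_neq _)).
move=> w; rewrite inE => Hy.
have E : forall i, sgnbit (frakf (a i) (g i)) w = (y1 w && y2 w) (+) sgnbit (a i) (xpart w).
  move=> i; rewrite /sgnbit walshF Hy sgn_lem // -normr_eq0 Hb'.
  exact: nz.
rewrite (eq_bigr _ (fun i _ => E i)).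
move: (Hs (xpart w)); rewrite !big_ord_recr !big_ord0 /=.
set b0 := sgnbit _ _; set b1 := sgnbit _ _; set b2 := sgnbit _ _; set b3 := sgnbit _ _.
by case: (y1 w && y2 w); case: b0; case: b1; case: b2; case: b3.
Qed.
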